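(* If $M_C$ is a semi-positive or semi-negative mixed cycle of arbitrary order $n\ge3$, or a negative mixed cycle of even order, then $\rho(M_C)<2$.
   Context: A mixed graph is obtained from a finite simple graph by orienting some of its edges. With $\omega=\frac{1+\mathbf{i}\sqrt3}{2}$, the matrix $N=(n_{st})$ has entry $\omega$ for an arc from $u_s$ to $u_t$, $\bar\omega$ for an arc from $u_t$ to $u_s$, $1$ for an undirected edge, $0$ otherwise; $\rho$ is the maximum absolute value of an eigenvalue of $N$. A mixed cycle has underlying graph a cycle $v_1\cdots v_nv_1$ and weight $n_{12}\cdots n_{n1}$; it is negative if the weight is $-1$, semi-positive if it is $\omega$ or $\bar\omega$, semi-negative if it is $-\omega$ or $-\bar\omega$. *)

(* Defs.v *)
From HB Require Import structures.
From mathcomp Require Import all_boot all_order all_algebra all_field.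
Set Implicit Arguments. Unset Strict Implicit. Unset Printing Implicit Defensive.
Import Order.TTheory GRing.Theory Num.Theory.
Local Open Scope ring_scope.

Definition omega : algC := (1 + 'i * sqrtC 3) / 2.

(* A mixed graph on the finite vertex type T: underlying simple graph with
   edge relation E (symmetric, irreflexive); A u v means the edge uv is
   oriented as an arc from u to v. *)
Definition mixed_graph (T : finType) (E A : rel T) : Prop :=
  [/\ symmetric E, irreflexive E,
      (forall u v, A u v -> E u v) &
      (forall u v, A u v -> ~~ A v u)].

Definition nentry (T : finType) (E A : rel T) (u v : T) : algC :=
  if A u v then omega
  else if A v u then omega^*
  else if E u v then 1 else 0.

Definition Nmx (T : finType) (E A : rel T) : 'M[algC]_#|T| :=
  \matrix_(s, t) nentry E A (enum_val s) (enum_val t).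

Definition spectral_radius (n : nat) (M : 'M[algC]_n) (r : algC) : Prop :=
  (exists2 a, eigenvalue M a & `|a| = r) /\
  (forall a, eigenvalue M a -> `|a| <= r).

Definition mixed_cycle (T : finType) (E : rel T) (f : 'I_#|T| -> T) : Prop :=
  injective f /\
  forall u v, E u v =
    [exists i, ((u == f i) && (v == f (ordS i)))
               || ((v == f i) && (u == f (ordS i)))].

Definition cycle_weight (T : finType) (E A : rel T) (f : 'I_#|T| -> T) : algC :=
  \prod_(i < #|T|) nentry E A (f i) (f (ordS i)).

Definition semi_positive (w : algC) := w = omega \/ w = omega^*.
Definition semi_negative (w : algC) := w = - omega \/ w = - omega^*.
Definition negative (w : algC) := w = -1.

(* Main.v *)
Require Import Defs.
From HB Require Import structures.
From mathcomp Require Import ring.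
From mathcomp Require Import all_boot all_order all_algebra all_field.
From mathcomp Require Import zify.
Import Order.TTheory GRing.Theory Num.Theory.
Local Open Scope ring_scope.

Lemma omega_conj : omega^* = 1 - omega.
Proof.
have s3 : (sqrtC 3 : algC) \is Num.real by apply: ger0_real; rewrite sqrtC_ge0 ler0n.
have e : ((1 + 'i * sqrtC 3)^* : algC) = 1 - 'i * sqrtC 3 := conjC_rect (rpred1 _) s3.
have e2 : ((2 : algC)^-1)^* = 2^-1 by rewrite geC0_conj // invr_ge0 ler0n.
rewrite /omega rmorphM /= e e2.
have h2 : (2 : algC) != 0 by rewrite pnatr_eq0.
by field.
Qed.

Lemma omega_sq : omega ^+ 2 = omega - 1.
Proof.
rewrite /omega.
have h3 : sqrtC 3 ^+ 2 = 3 :> algC by rewrite sqrtCK.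
have hi := sqrCi algC.
have h2 : (2 : algC) != 0 by rewrite pnatr_eq0.
rewrite expr_div_n sqrrD exprMn hi h3.
by field.
Qed.

Lemma omega_norm : omega * omega^* = 1.
Proof. rewrite omega_conj mulrBr mulr1 -expr2 omega_sq; ring. Qed.

Lemma omega_neq1 : omega != 1.
Proof.
apply/eqP => h; have := omega_sq; rewrite h expr1n subrr => /eqP; by rewrite oner_eq0.
Qed.

Lemma omega_neqN1 : omega != -1.
Proof.
apply/eqP => h; have := omega_sq; rewrite h sqrrN expr1n => h3.
have e : (3%:R : algC) = 1 - (-1 - 1) by ring.
by move/eqP: e; rewrite -h3 subrr pnatr_eq0.
Qed.

Lemma nentry_conj (T : finType) (E A : rel T) (hG : mixed_graph E A) u v : nentry E A v u = (nentry E A u v)^*.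
Proof.
case: hG => Es Ei AE Aa; rewrite /nentry.
case: (boolP (A u v)) => [huv|nuv].
  by rewrite (negbTE (Aa _ _ huv)).
case: (boolP (A v u)) => [hvu|nvu]; first by rewrite conjCK.
by rewrite Es; case: (E u v); rewrite ?conjC1 ?conjC0.
Qed.

Lemma nentry0 (T : finType) (E A : rel T) (hG : mixed_graph E A) u v : ~~ E u v -> nentry E A u v = 0.
Proof.
case: hG => Es Ei AE Aa nE; rewrite /nentry.
case: (boolP (A u v)) => [/AE h|_]; first by rewrite h in nE.
case: (boolP (A v u)) => [/AE h|_]; first by rewrite Es h in nE.
by rewrite (negbTE nE).
Qed.

Lemma norm_eq (x y M : algC) : `|x| <= M -> `|y| <= M -> 2 * M <= `|x + y| -> x = y.
Proof.
move=> hx hy hs.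
have M0 : 0 <= M by apply: le_trans hx.
have par : `|x + y| ^+ 2 + `|x - y| ^+ 2 = 2 * `|x| ^+ 2 + 2 * `|y| ^+ 2.
  rewrite !normCK !rmorphD rmorphN /=; ring.
have h1 : (2 * M) ^+ 2 <= `|x + y| ^+ 2 by rewrite lerXn2r // ?nnegrE ?mulr_ge0 ?ler0n.
have h2 : `|x| ^+ 2 <= M ^+ 2 by rewrite lerXn2r // ?nnegrE.
have h3 : `|y| ^+ 2 <= M ^+ 2 by rewrite lerXn2r // ?nnegrE.
have h4 : `|x - y| ^+ 2 <= 0.
  have : `|x - y| ^+ 2 = 2 * `|x| ^+ 2 + 2 * `|y| ^+ 2 - `|x + y| ^+ 2.
    by rewrite -par; ring.
  move=> ->; rewrite subr_le0 (le_trans _ h1) //.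
  rewrite exprMn.
  have -> : (2 : algC) ^+ 2 = 2 + 2 by rewrite expr2 -!natrM -natrD.
  by rewrite [(2 + 2) * _]mulrDl lerD // ler_pM2l ?ltr0n.
have : `|x - y| ^+ 2 == 0 by rewrite eq_le h4 exprn_ge0.
by rewrite expf_eq0 /= normr_eq0 subr_eq0 => /eqP.
Qed.

Local Close Scope ring_scope.
Lemma iter_ordS n (i : 'I_n) k : val (iter k (@ordS n) i) = (i + k) %% n.
Proof.
elim: k => [|k IH] /=; first by rewrite addn0 modn_small.
by rewrite IH -addn1 modnDml addn1 addnS.
Qed.

Lemma ordS_closure n (P : pred 'I_n) i0 :
  P i0 -> (forall i, P i -> P (ordS i)) -> forall j, P j.
Proof.
move=> h0 hS j.
have hk : forall k, P (iter k (@ordS n) i0).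
  by elim=> [|k IH] //=; apply: hS.
have -> : j = iter (j + (n - i0)) (@ordS n) i0 => //.
apply: val_inj; rewrite iter_ordS addnCA subnKC; last exact: ltnW.
by rewrite modnDr modn_small.
Qed.
Lemma ordSS_neq n (i : 'I_n) : (3 <= n)%N -> ord_pred i != ordS i.
Proof.
move=> n3; apply/eqP => h.
have h2 : val (ordS (ordS i)) = i by rewrite -h ord_predK.
have hi := ltn_ord i.
have : ((i + 2) %% n)%N = i by rewrite -(@iter_ordS n i 2).
case: (ltnP (i + 2) n) => hl; first by rewrite modn_small //; lia.
have -> : (i + 2 = (i + 2 - n) + n)%N by lia.
rewrite modnDr modn_small; lia.
Qed.

Local Open Scope ring_scope.
Lemma nentry_unit (T : finType) (E A : rel T) u v :
  mixed_graph E A -> E u v -> nentry E A u v * (nentry E A u v)^* = 1.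
Proof.
case=> Es Ei AE Aa he; rewrite /nentry.
case: (A u v); first exact: omega_norm.
case: (A v u); first by rewrite conjCK mulrC omega_norm.
by rewrite he conjC1 mulr1.
Qed.

Lemma exists_max (I : finType) (g : I -> algC) (i1 : I) :
  (forall i, 0 <= g i) -> exists i0, forall i, g i <= g i0.
Proof.
move=> g0.
suff [i0 h] : exists i0, forall i, i \in enum I -> g i <= g i0.
  by exists i0 => i; apply: h; rewrite mem_enum.
elim: (enum I) => [|x s [i0 IH]]; first by exists i1.
have rx : g x \is Num.real by apply: ger0_real.
have r0 : g i0 \is Num.real by apply: ger0_real.
case/orP: (real_leVge rx r0) => hc.
  exists i0 => i; rewrite in_cons => /orP [/eqP -> //|hs]; exact: IH.
exists x => i; rewrite in_cons => /orP [/eqP -> //|hs].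
exact: le_trans (IH i hs) hc.
Qed.

Theorem lemma6p11 (T : finType) (E A : rel T) (f : 'I_#|T| -> T) :
  (3 <= #|T|)%N ->
  mixed_graph E A ->
  mixed_cycle E f ->
  [\/ semi_positive (cycle_weight E A f),
      semi_negative (cycle_weight E A f)
    | negative (cycle_weight E A f) /\ ~~ odd #|T| ] ->
  forall r : algC, spectral_radius (Nmx E A) r -> r < 2.
Proof.
move=> n3 hG [finj hE] hw r [[a ev <-] _].
rewrite real_ltNge ?ger0_real ?normr_ge0 ?ler0n //; apply/negP => ha.
move/eigenvalueP: ev => [v hv vn0].
move/rowP: hv => hvr.
pose p i := enum_rank (f i).
have pinj : injective p by move=> i j /enum_rank_inj /finj.
have [q pq qp] := injF_bij pinj.
pose u i := v 0 (p i).
pose m i := nentry E A (f i) (f (ordS i)).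
have adj : forall i j, E (f j) (f i) = (j == ordS i) || (i == ordS j).
  move=> i j; rewrite hE; apply/existsP/orP.
    case=> k /orP [] /andP [/eqP /finj -> /eqP /finj ->]; [right|left]; done.
  case=> /eqP ->; [exists i|exists j]; rewrite !eqxx ?orbT //.
have eig : forall i, a * u i = u (ordS i) * (m i)^* + u (ord_pred i) * m (ord_pred i).
  move=> i.
  have := hvr (p i).
  rewrite !mxE => <-.
  rewrite (reindex_inj pinj) /=.
  rewrite (bigD1 (ordS i)) //= (bigD1 (ord_pred i)) /=; last first.
    by rewrite ordSS_neq.
  rewrite big1 ?addr0; last first.
    move=> j /andP [hj1 hj2]; rewrite mxE !enum_rankK (@nentry0 _ _ _ hG) ?mulr0 //.
    rewrite adj negb_or hj1 /=; apply: contra hj2 => /eqP ->.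
    by rewrite ordSK.
  rewrite !mxE !enum_rankK (@nentry_conj _ _ _ hG) /m.
  by rewrite ord_predK.
have mu : forall i, m i * (m i)^* = 1.
  move=> i; apply: nentry_unit => //; by rewrite adj eqxx orbT.
have mn : forall i, `|m i| = 1.
  move=> i; apply/eqP; rewrite -(@sqrp_eq1 _ `|m i|) ?normr_ge0 //.
  by rewrite normCK mu.
have mcn : forall i, `|(m i)^*| = 1 by move=> i; rewrite norm_conjC mn.
have u0 : exists i, u i != 0.
  apply/existsP; apply: contraR vn0; rewrite negb_exists => /forallP h.
  apply/eqP/rowP => t; rewrite mxE -[t]qp.
  by have := h (q t); rewrite negbK => /eqP.
case: u0 => i1 hi1.
have [i0 hmax] := @exists_max _ (fun i => `|u i|) i1 (fun i => normr_ge0 (u i)).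
set M := `|u i0| in hmax.
have M0 : 0 < M by rewrite (lt_le_trans _ (hmax i1)) // normr_gt0.
have step : forall i, `|u i| = M ->
    u (ordS i) * (m i)^* = u (ord_pred i) * m (ord_pred i) /\ `|u (ordS i)| = M.
  move=> i hi.
  have hxy : u (ordS i) * (m i)^* = u (ord_pred i) * m (ord_pred i).
    apply: (@norm_eq _ _ M).
    - by rewrite normrM mcn mulr1.
    - by rewrite normrM mn mulr1.
    by rewrite -eig normrM hi ler_pM2r.
  split => //; apply/eqP; rewrite eq_le hmax /=.
  have := eig i; rewrite -hxy => e2.
  have : 2 * M <= `|a * u i| by rewrite normrM hi ler_pM2r.
  rewrite e2 -mulr2n normrMn normrM mcn mulr1 -mulr_natl => h.
  have h2p : (0 : algC) < 2 by rewrite ltr0n.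
  rewrite -(ler_pM2l h2p); rewrite mulr1 in h; apply: le_trans h _. by rewrite mulr2n mulrDl mul1r.
have allM : forall i, `|u i| = M.
  move=> j; apply/eqP; move: j; apply: (@ordS_closure _ (fun i => `|u i| == M) i0).
    by rewrite /= eqxx.
  by move=> i /eqP /step [_ ->].
pose c := a / 2.
have R2 : forall i, u (ordS i) * (m i)^* = c * u i.
  move=> i; have [hxy _] := step i (allM i).
  have e := eig i; rewrite -hxy in e.
  rewrite /c mulrAC e.
  have h2 : (2 : algC) != 0 by rewrite pnatr_eq0.
  by field.
have R1 : forall i, u i * m i = c * u (ordS i).
  move=> i; have [hxy _] := step (ordS i) (allM _).
  by rewrite ordSK in hxy; rewrite -hxy R2.
have un0 : forall i, u i != 0.
  by move=> i; rewrite -normr_eq0 allM gt_eqF.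
have c2 : c ^+ 2 = 1.
  have i := i0.
  have h := R2 i.
  have h' : u (ordS i) = c * u i * m i.
    by rewrite -h -mulrA [(m i)^* * _]mulrC mu mulr1.
  rewrite -mulrA R1 mulrA -expr2 in h'.
  apply/eqP; rewrite -subr_eq0; apply/eqP.
  apply: (mulIf (un0 (ordS i))); rewrite mul0r mulrBl mul1r -{1}h'; ring.
have wc : cycle_weight E A f = c ^+ #|T|.
  have hp : \prod_i (u i * m i) = \prod_i (c * u (ordS i)) by apply: eq_bigr => i _; exact: R1.
  rewrite big_split big_split /= prodr_const card_ord in hp.
  rewrite -(reindex_inj (@ordS_inj _) (P := xpredT) (F := fun i => u i)) /= in hp.
  have pn0 : \prod_i u i != 0 by apply/prodf_neq0 => i _.
  apply: (mulfI pn0); rewrite hp mulrC //.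
have omega_pm : forall w, (w = omega \/ w = omega^*) -> w <> 1 /\ w <> -1.
  move=> w [] ->; split => h.
  - by move/eqP: omega_neq1.
  - by move/eqP: omega_neqN1.
  - by move: omega_neq1; rewrite -(conjCK omega) h rmorph1 eqxx.
  - by move: omega_neqN1; rewrite -(conjCK omega) h rmorphN1 eqxx.
have cpm : c = 1 \/ c = -1 by move/eqP: c2; rewrite sqrf_eq1 => /orP [] /eqP; [left|right].
have wpm : c ^+ #|T| = 1 \/ c ^+ #|T| = -1.
  case: cpm => ->; first by left; rewrite expr1n.
  by rewrite -signr_odd; case: (odd _); [right|left].
case: hw.
- move=> /omega_pm []; rewrite wc; case: wpm => -> //.
- move=> [] h.
  + have := omega_pm omega (or_introl erefl); rewrite -[omega]opprK -h wc.
    case: wpm => -> []; rewrite ?opprK //.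
  + have := omega_pm (omega^*) (or_intror erefl); rewrite -[omega^*]opprK -h wc.
    case: wpm => -> []; rewrite ?opprK //.
- move=> [hn ev]; move: hn; rewrite /negative wc.
  case: cpm => ->; first rewrite expr1n.
  + move=> h; have : (1 + 1 : algC) = 0 by rewrite {1}h addNr.
    by move/eqP; rewrite -mulr2n pnatr_eq0.
  + rewrite -signr_odd (negbTE ev) expr0 => h.
    have : (1 + 1 : algC) = 0 by rewrite {1}h addNr.
    by move/eqP; rewrite -mulr2n pnatr_eq0.
Qed.
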